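(* Let $\mathcal T\in\Sigma^n$ be a text. Then $|\mathtt{st\text{-}pos}^-|$ is at most the number of escape symbols $\bot$ output by the following simple version of PPM$^*$ on $\mathcal T$: encode $\mathcal T[1]$ as $\bot\mathcal T[1]$; for $j=2,\dots,n$, let $i'$ be the minimum $i'\le j$ such that $\mathcal T[i',j-1]$ occurs in $\mathcal T[1,j-2]$; if $\mathcal T[i',j]$ occurs in $\mathcal T[1,j-1]$, encode $\mathcal T[j]$ according to the distribution of characters immediately following occurrences of $\mathcal T[i',j-1]$, otherwise encode $\mathcal T[j]$ as $\bot\mathcal T[j]$.
   Context: A text is a string $\mathcal T\in\Sigma^n$ over an integer alphabet whose last symbol $\mathcal T[n]=\$$ occurs only there and is smallest. For $i\ne j$, $\mathrm{rlce}(i,j)$ is the length of the longest common prefix of $\mathcal T[i,n]$ and $\mathcal T[j,n]$. $\mathrm{LPF}[i]=0$ if $i=1$, else $\mathrm{LPF}[i]=\max_{j<i}\mathrm{rlce}(j,i)$. $\mathtt{st\text{-}pos}^-$ is the set $\{i+\mathrm{LPF}[i]: i\in[n]\}$ (without duplicates), and $|\mathtt{st\text{-}pos}^-|$ its cardinality. The empty string $\mathcal T[j,j-1]$ is considered to occur in any string. *)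

(* Defs.v *)
(* Texts are 1-indexed: T[i] = tc T i for 1 <= i <= size T. *)
From mathcomp Require Import all_boot.
Set Implicit Arguments. Unset Strict Implicit. Unset Printing Implicit Defensive.

Definition tc (T : seq nat) (i : nat) : nat := nth 0 T i.-1.

(* A text: nonempty, and the last symbol T[n] is strictly smaller than every
   other symbol (hence occurs only at position n and is the smallest). *)
Definition is_text (T : seq nat) : bool :=
  (0 < size T) && all (fun i => tc T (size T) < tc T i) (iota 1 (size T).-1).

(* occ T a len d : the string T[a, a+len-1] occurs in T[1, d]
   (the empty string, len = 0, occurs in any string). *)
Definition occ (T : seq nat) (a len d : nat) : bool :=
  (len == 0) ||
  [exists p : 'I_d.+1, (1 <= p) && (p + len <= d.+1) &&
     [forall k : 'I_len, tc T (p + k) == tc T (a + k)]].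

(* rlce T i j : length of the longest common prefix of T[i,n] and T[j,n]. *)
Definition rlce (T : seq nat) (i j : nat) : nat :=
  \max_(l < (size T).+1 | (i + l <= (size T).+1) && (j + l <= (size T).+1) &&
                          [forall k : 'I_l, tc T (i + k) == tc T (j + k)]) l.

Definition LPF (T : seq nat) (i : nat) : nat :=
  if i == 1 then 0 else \max_(1 <= j < i) rlce T j i.

Definition st_pos_minus (T : seq nat) : seq nat :=
  undup [seq i + LPF T i | i <- iota 1 (size T)].

(* i' : minimum i' <= j such that T[i', j-1] occurs in T[1, j-2]
   (i' = j, the empty string, always qualifies). *)
Definition iprime (T : seq nat) (j : nat) : nat :=
  \big[minn/j]_(1 <= i < j | occ T i (j - i) (j - 2)) i.

Definition ppm_escape (T : seq nat) (j : nat) : bool :=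
  ~~ occ T (iprime T j) (j - iprime T j).+1 (j - 1).

Definition ppm_escapes (T : seq nat) : nat :=
  1 + count (ppm_escape T) (iota 2 (size T).-1).

(* Main.v *)
Require Import Defs.
From mathcomp Require Import all_boot.
From mathcomp Require Import zify.

Lemma bigmax_att (I : eqType) (r : seq I) (P : pred I) (F : I -> nat) :
  0 < \max_(x <- r | P x) F x ->
  exists x, [/\ x \in r, P x & F x = \max_(x <- r | P x) F x].
Proof.
elim: r => [|a r IH]; first by rewrite big_nil.
rewrite big_cons; case: (boolP (P a)) => Pa /=.
- case: (leqP (F a) (\max_(x <- r | P x) F x)) => H.
  + move=> /IH [x [xr Px Fx]].
    by exists x; rewrite inE xr orbT.
  + move=> _; exists a; rewrite inE eqxx Pa; split => //.
- move=> /IH [x [xr Px Fx]]; by exists x; rewrite inE xr orbT.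
Qed.

Lemma bigmin_le (r : seq nat) (P : pred nat) (j x : nat) :
  x \in r -> P x -> \big[minn/j]_(i <- r | P i) i <= x.
Proof.
elim: r => [|a r IH] //=; rewrite big_cons inE => /orP [/eqP -> Px|xr Px].
- by rewrite Px geq_minl.
- case: (P a); last exact: IH.
  by apply: leq_trans (geq_minr _ _) (IH xr Px).
Qed.

Lemma bigmin_lej (r : seq nat) (P : pred nat) (j : nat) :
  \big[minn/j]_(i <- r | P i) i <= j.
Proof.
elim: r => [|a r IH]; first by rewrite big_nil.
rewrite big_cons; case: (P a) => //.
by apply: leq_trans (geq_minr _ _) IH.
Qed.

Lemma rlce_ge T i j l : 1 <= i -> i + l <= (size T).+1 -> j + l <= (size T).+1 ->
  (forall k, k < l -> tc T (i + k) = tc T (j + k)) -> l <= rlce T i j.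
Proof.
move=> i1 H1 H2 H3.
have Hl : l < (size T).+1 by lia.
rewrite /rlce.
apply: (@leq_bigmax_cond _ _ (fun l : 'I_(size T).+1 => (l : nat)) (Ordinal Hl)).
rewrite /= H1 H2 /=; apply/forallP => k; apply/eqP; apply: H3; exact: ltn_ord.
Qed.

Lemma rlce_spec T i j : 0 < rlce T i j ->
  [/\ i + rlce T i j <= (size T).+1, j + rlce T i j <= (size T).+1 &
     forall k, k < rlce T i j -> tc T (i + k) = tc T (j + k)].
Proof.
rewrite /rlce => /bigmax_att [x [_ /andP [/andP [H1 H2] /forallP H3] <-]].
split => // k kx; exact: (eqP (H3 (Ordinal kx))).
Qed.

Lemma LPF_ge T i q : 1 <= q < i -> rlce T q i <= LPF T i.
Proof.
move=> /andP [q1 qi]; rewrite /LPF ifN; last by apply/eqP; lia.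
rewrite big_nat_cond.
apply: leq_bigmax_seq; first by rewrite mem_index_iota; lia.
by rewrite q1 qi.
Qed.

Lemma LPF_spec T i : 0 < LPF T i -> exists q, 1 <= q < i /\ rlce T q i = LPF T i.
Proof.
rewrite /LPF; case: ifP => // _.
move=> /bigmax_att [x [xr _ Fx]]; exists x; split => //.
by move: xr; rewrite mem_index_iota.
Qed.

Lemma LPF_bound T i : is_text T -> 1 <= i <= size T -> i + LPF T i <= size T.
Proof.
move=> /andP [n0 /allP Hall] /andP [i1 iN].
case: (posnP (LPF T i)) => [->|Lp]; first by rewrite addn0.
have [q [/andP [q1 qi] Hq]] := @LPF_spec T i Lp.
have Hr : 0 < rlce T q i by rewrite Hq.
have [H1 H2 H3] := @rlce_spec T q i Hr.
rewrite Hq in H1 H2 H3.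
rewrite leqNgt; apply/negP => Hc.
have E : i + LPF T i = (size T).+1 by lia.
have Hk : LPF T i - 1 < LPF T i by lia.
have := H3 _ Hk.
have -> : i + (LPF T i - 1) = size T by lia.
move=> Heq.
have Hm : q + (LPF T i - 1) \in iota 1 (size T).-1 by rewrite mem_iota; lia.
have := Hall _ Hm; rewrite -Heq ltnn //.
Qed.

Lemma escape_at T i : is_text T -> 1 <= i <= size T -> 2 <= i + LPF T i ->
  ppm_escape T (i + LPF T i).
Proof.
move=> HT Hi Hv.
have Hb := @LPF_bound T i HT Hi.
move: Hi => /andP [i1 iN].
set L := LPF T i in Hv Hb *.
set v := i + L in Hv Hb *.
have Hip : iprime T v <= i.
  case: (posnP L) => [L0|Lp].
  - have -> : i = v by rewrite /v L0 addn0.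
    exact: bigmin_lej.
  - have [q [/andP [q1 qi] Hq]] := @LPF_spec T i Lp.
    have Hr : 0 < rlce T q i by rewrite Hq.
    have [H1 H2 H3] := @rlce_spec T q i Hr.
    rewrite Hq -/L in H1 H2 H3.
    apply: bigmin_le; first by rewrite mem_index_iota; lia.
    rewrite /occ; apply/orP; right.
    have qlt : q < (v - 2).+1 by lia.
    apply/existsP; exists (Ordinal qlt) => /=.
    rewrite q1 /=; apply/andP; split; first by lia.
    apply/forallP => k; apply/eqP.
    have kL : k < L by have := ltn_ord k; lia.
    by rewrite (H3 _ kL).
rewrite /ppm_escape; apply/negP.
set i' := iprime T v in Hip *.
rewrite /occ /= => /existsP [p /andP [/andP [p1 pv] /forallP Hm]].
have Hge : L.+1 <= rlce T (p + (i - i')) i.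
  apply: rlce_ge; [lia | lia | lia |].
  move=> k kL.
  have kk : i - i' + k < (v - i').+1 by lia.
  have := eqP (Hm (Ordinal kk)); rewrite /= !addnA.
  have -> : i' + (i - i') = i by lia.
  by move=> ->.
have H := @LPF_ge T i (p + (i - i')).
rewrite -/L in H; have : rlce T (p + (i - i')) i <= L by apply: H; lia.
lia.
Qed.

Theorem lemma48 (T : seq nat) :
  is_text T -> size (st_pos_minus T) <= ppm_escapes T.
Proof.
move=> HT.
rewrite /ppm_escapes /st_pos_minus.
have -> : 1 + count (ppm_escape T) (iota 2 (size T).-1) =
          size (1 :: [seq j <- iota 2 (size T).-1 | ppm_escape T j]).
  by rewrite /= size_filter add1n.
apply: uniq_leq_size; first exact: undup_uniq.
move=> x; rewrite mem_undup => /mapP [i]; rewrite mem_iota => Hi ->.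
have Hi' : 1 <= i <= size T by lia.
rewrite inE; case: (eqVneq (i + LPF T i) 1) => [->|H1] //=.
rewrite mem_filter escape_at //; last by lia.
have := @LPF_bound T i HT Hi'.
rewrite mem_iota; lia.
Qed.
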